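(* Let $\alpha\in(1,2)$ be irrational. Then $\alpha$ has a purely periodic Lehner expansion if and only if $\alpha$ is a quadratic irrational whose Galois conjugate $\bar\alpha$ satisfies $\bar\alpha<1$. Furthermore, if $\alpha=[\![\overline{(a_0,\epsilon_0)(a_1,\epsilon_1)\cdots(a_{r-1},\epsilon_{r-1})}]\!]$, then $\bar\alpha=-\langle\!\langle\overline{(\epsilon_{r-1}/a_{r-1})\cdots(\epsilon_0/a_0)}\rangle\!\rangle$.
   Context: The Lehner map on $[1,2)$ is $L(x)=\frac{1}{2-x}$ for $x\in[1,3/2)$ and $L(x)=\frac{1}{x-1}$ for $x\in[3/2,2)$. For irrational $x\in(1,2)$, its Lehner digits are $(a_i,\epsilon_i)=(2,-1)$ if $L^i(x)\in[1,3/2)$ and $(a_i,\epsilon_i)=(1,+1)$ if $L^i(x)\in[3/2,2)$, and $x=a_0+\cfrac{\epsilon_0}{a_1+\cfrac{\epsilon_1}{a_2+\cdots}}$, written $[\![(a_0,\epsilon_0)(a_1,\epsilon_1)\cdots]\!]$ (the Lehner expansion). For digits $(f_i/b_i)\in\{(-1/2),(+1/1)\}$, $\langle\!\langle(f_0/b_0)(f_1/b_1)\cdots\rangle\!\rangle$ denotes the value of $\cfrac{f_0}{b_0+\cfrac{f_1}{b_1+\cdots}}$; a Lehner digit $(a,\epsilon)$ corresponds to the Farey-type digit $(\epsilon/a)$. An overline denotes infinite periodic repetition of the block; ''purely periodic'' means the digit sequence is periodic from index $0$. *)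

(* Defs.v *)
From Stdlib Require Import Reals Lra Lia ZArith Arith.
Open Scope R_scope.

Definition lehner_map (x : R) : R :=
  if Rlt_dec x (3/2) then 1 / (2 - x) else 1 / (x - 1).

Fixpoint lehner_iter (n : nat) (x : R) : R :=
  match n with
  | O => x
  | S k => lehner_map (lehner_iter k x)
  end.

Definition lehner_a (x : R) (i : nat) : R :=
  if Rlt_dec (lehner_iter i x) (3/2) then 2 else 1.
Definition lehner_eps (x : R) (i : nat) : R :=
  if Rlt_dec (lehner_iter i x) (3/2) then -1 else 1.

Definition irrational (x : R) : Prop :=
  forall p q : Z, q <> 0%Z -> x <> IZR p / IZR q.

Definition lehner_purely_periodic (x : R) : Prop :=
  exists r : nat, (0 < r)%nat /\
    forall i : nat, lehner_a x (i + r) = lehner_a x i /\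
                    lehner_eps x (i + r) = lehner_eps x i.

Definition quadratic_irrational (x : R) : Prop :=
  irrational x /\
  exists a b c : Z, a <> 0%Z /\ IZR a * x ^ 2 + IZR b * x + IZR c = 0.

(* beta is the Galois conjugate of x: the other root of an integer quadratic
   a X^2 + b X + c vanishing at x (well defined for irrational x). *)
Definition galois_conj (x beta : R) : Prop :=
  exists a b c : Z, a <> 0%Z /\ IZR a * x ^ 2 + IZR b * x + IZR c = 0 /\
    beta = - (IZR b / IZR a) - x.

(* Finite truncation  f_m/(b_m + f_{m+1}/(b_{m+1} + ... + f_{m+k}/b_{m+k})). *)
Fixpoint cf_aux (f b : nat -> R) (m k : nat) : R :=
  match k with
  | O => f m / b m
  | S k' => f m / (b m + cf_aux f b (S m) k')
  end.

Definition cf_trunc (f b : nat -> R) (n : nat) : R := cf_aux f b 0 n.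

(* Reversed period index: j |-> r-1-(j mod r), giving the sequence
   (r-1),(r-2),...,0,(r-1),... *)
Definition rev_idx (r j : nat) : nat := (r - 1 - Nat.modulo j r)%nat.

(* Main.v *)
Require Import Defs.
From Stdlib Require Import Reals Lra Lia Psatz ZArith Arith List Classical.
Open Scope R_scope.

Definition rat (x : R) := exists p q : Z, q <> 0%Z /\ x = IZR p / IZR q.

Lemma irr_not_rat x : irrational x -> ~ rat x.
Proof. intros H [p [q [Hq E]]]. exact (H p q Hq E). Qed.

Lemma not_rat_irr x : ~ rat x -> irrational x.
Proof. intros H p q Hq E. apply H. exists p, q. auto. Qed.

Lemma rat_IZR z : rat (IZR z).
Proof. exists z, 1%Z. split; [lia|]. simpl. field. Qed.

Lemma rat_plus x y : rat x -> rat y -> rat (x + y).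
Proof.
  intros [p [q [Hq E]]] [p' [q' [Hq' E']]]. subst.
  exists (p*q' + p'*q)%Z, (q*q')%Z. split; [lia|].
  rewrite plus_IZR, !mult_IZR. apply not_0_IZR in Hq. apply not_0_IZR in Hq'. field; auto.
Qed.

Lemma rat_opp x : rat x -> rat (- x).
Proof.
  intros [p [q [Hq E]]]. subst. exists (-p)%Z, q. split; auto.
  rewrite opp_IZR. apply not_0_IZR in Hq. field; auto.
Qed.

Lemma rat_minus x y : rat x -> rat y -> rat (x - y).
Proof. intros. unfold Rminus. apply rat_plus; auto. apply rat_opp; auto. Qed.

Lemma rat_mult x y : rat x -> rat y -> rat (x * y).
Proof.
  intros [p [q [Hq E]]] [p' [q' [Hq' E']]]. subst.
  exists (p*p')%Z, (q*q')%Z. split; [lia|].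
  rewrite !mult_IZR. apply not_0_IZR in Hq. apply not_0_IZR in Hq'. field; auto.
Qed.

Lemma rat_inv x : rat x -> x <> 0 -> rat (/ x).
Proof.
  intros [p [q [Hq E]]] Hx. subst.
  assert (Hp : p <> 0%Z). { intro. subst. apply Hx. unfold Rdiv. simpl. ring. }
  exists q, p. split; auto.
  apply not_0_IZR in Hq. apply not_0_IZR in Hp. field; auto.
Qed.

Lemma rat_div x y : rat x -> rat y -> y <> 0 -> rat (x / y).
Proof. intros. unfold Rdiv. apply rat_mult; auto. apply rat_inv; auto. Qed.

Definition brx (x : R) : bool := if Rlt_dec x (3/2) then true else false.
Definition stepR (bb : bool) (y : R) : R := if bb then 1 / (2 - y) else 1 / (y - 1).
Definition gR (bb : bool) (y : R) : R := if bb then 2 - 1 / y else 1 + 1 / y.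

Lemma lehner_map_step x : lehner_map x = stepR (brx x) x.
Proof. unfold lehner_map, stepR, brx. destruct (Rlt_dec x (3/2)); reflexivity. Qed.

Lemma brx_true x : brx x = true <-> x < 3/2.
Proof. unfold brx. destruct (Rlt_dec x (3/2)); split; intro; auto; try discriminate; lra. Qed.

Lemma brx_false x : brx x = false <-> ~ x < 3/2.
Proof. unfold brx. destruct (Rlt_dec x (3/2)); split; intro; auto; try discriminate; lra. Qed.

Lemma map_ok x : irrational x -> 1 < x < 2 ->
  irrational (lehner_map x) /\ 1 < lehner_map x < 2.
Proof.
  intros Hi Hx. rewrite lehner_map_step. unfold stepR.
  assert (H32 : x <> 3/2).
  { intro E. apply (irr_not_rat x Hi). rewrite E. exists 3%Z, 2%Z. split; [lia|]. reflexivity. }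
  destruct (brx x) eqn:Eb.
  - apply brx_true in Eb. split.
    + apply not_rat_irr. intro Hr. apply (irr_not_rat x Hi).
      assert (E : x = 2 - / (1 / (2 - x))) by (field; lra).
      rewrite E. apply rat_minus. apply rat_IZR. apply rat_inv; auto.
      unfold Rdiv. rewrite Rmult_1_l. apply Rinv_neq_0_compat. lra.
    + assert (Hy : 1 / (2 - x) * (2 - x) = 1) by (field; lra).
      set (y := 1 / (2 - x)) in *. split; nra.
  - apply brx_false in Eb. split.
    + apply not_rat_irr. intro Hr. apply (irr_not_rat x Hi).
      assert (E : x = 1 + / (1 / (x - 1))) by (field; lra).
      rewrite E. apply rat_plus. apply rat_IZR. apply rat_inv; auto.
      unfold Rdiv. rewrite Rmult_1_l. apply Rinv_neq_0_compat. lra.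
    + assert (Hy : 1 / (x - 1) * (x - 1) = 1) by (field; lra).
      set (y := 1 / (x - 1)) in *. split; nra.
Qed.

Notation X al n := (lehner_iter n al).

Lemma orbit_ok al : irrational al -> 1 < al < 2 ->
  forall n, irrational (X al n) /\ 1 < X al n < 2.
Proof.
  intros Hi Hx n. induction n as [|n IH]; simpl; auto.
  destruct IH. apply map_ok; auto.
Qed.

Lemma iter_add i p x : lehner_iter (i + p) x = lehner_iter i (lehner_iter p x).
Proof. induction i; simpl; auto. rewrite IHi. reflexivity. Qed.

Lemma X_S al n : X al (S n) = stepR (brx (X al n)) (X al n).
Proof. simpl. apply lehner_map_step. Qed.

Lemma gR_stepR (bb : bool) (y : R) : (if bb then y <> 2 else y <> 1) -> gR bb (stepR bb y) = y.
Proof. intros H. destruct bb; unfold gR, stepR; field; lra. Qed.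

Lemma X_back al n : irrational al -> 1 < al < 2 ->
  X al n = gR (brx (X al n)) (X al (S n)).
Proof.
  intros Hi Hx. rewrite X_S. destruct (orbit_ok al Hi Hx n) as [_ H].
  rewrite gR_stepR; auto. destruct (brx _); lra.
Qed.

Lemma lehner_a_br al i : lehner_a al i = if brx (X al i) then 2 else 1.
Proof. unfold lehner_a, brx. destruct (Rlt_dec _ _); auto. Qed.
Lemma lehner_eps_br al i : lehner_eps al i = if brx (X al i) then -1 else 1.
Proof. unfold lehner_eps, brx. destruct (Rlt_dec _ _); auto. Qed.

Lemma gR_lip bb s t : 0 < s -> 0 < t ->
  Rabs (gR bb s - gR bb t) * (s * t) = Rabs (s - t).
Proof.
  intros Hs Ht.
  assert (E : (gR bb s - gR bb t) * (s * t) = if bb then s - t else t - s)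
    by (destruct bb; unfold gR; field; lra).
  rewrite <- (Rabs_pos_eq (s*t)) by nra. rewrite <- Rabs_mult, E.
  destruct bb; auto. apply Rabs_minus_sym.
Qed.

Definition Rel (t : Z*Z*Z) (x b : R) : Prop :=
  let '(A,B,C) := t in
  A <> 0%Z /\ IZR A * x ^ 2 + IZR B * x + IZR C = 0 /\ b = - (IZR B / IZR A) - x.

Lemma Rel_BC A B C x b : Rel (A,B,C) x b ->
  IZR B = - IZR A * (x + b) /\ IZR C = IZR A * x * b.
Proof.
  intros [HA [E Hb]]. apply not_0_IZR in HA.
  assert (HB : IZR B = - IZR A * (x + b)) by (subst b; field; auto).
  split; auto. rewrite HB in E. nra.
Qed.

Lemma Rel_irr t x b : Rel t x b -> irrational x -> irrational b.
Proof.
  destruct t as [[A B] C]. intros [HA [E Hb]] Hi. apply not_rat_irr. intro Hr.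
  apply (irr_not_rat x Hi).
  assert (Ex : x = - (IZR B / IZR A) - b) by lra. rewrite Ex.
  apply rat_minus; auto. apply rat_opp. apply rat_div; try apply rat_IZR.
  apply not_0_IZR; auto.
Qed.

Lemma Rel_neq t x b : Rel t x b -> irrational x -> x <> b.
Proof.
  destruct t as [[A B] C]. intros [HA [E Hb]] Hi Exb. apply (irr_not_rat x Hi).
  assert (Ex : x = - (IZR B / IZR A) / 2) by lra. rewrite Ex.
  apply rat_div. apply rat_opp. apply rat_div; try apply rat_IZR.
  apply not_0_IZR; auto. apply rat_IZR. lra.
Qed.

Lemma irr_neq_IZR x z : irrational x -> x <> IZR z.
Proof. intros Hi E. apply (irr_not_rat x Hi). rewrite E. apply rat_IZR. Qed.

Definition stepT (bb : bool) (t : Z*Z*Z) : Z*Z*Z :=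
  let '(A,B,C) := t in
  if bb then ((4*A+2*B+C)%Z, (-4*A-B)%Z, A) else ((A+B+C)%Z, (2*A+B)%Z, A).

Lemma step_Rel bb t x b : Rel t x b -> x <> 1 -> x <> 2 -> b <> 1 -> b <> 2 ->
  Rel (stepT bb t) (stepR bb x) (stepR bb b).
Proof.
  destruct t as [[A B] C]. intros HR Hx1 Hx2 Hb1 Hb2.
  destruct (Rel_BC _ _ _ _ _ HR) as [HB HC].
  destruct HR as [HA [E Hb]]. apply not_0_IZR in HA.
  destruct bb; unfold stepT, stepR; cbv beta iota zeta.
  - assert (HA' : IZR (4*A+2*B+C) = IZR A * (2 - x) * (2 - b)).
    { rewrite !plus_IZR, !mult_IZR, HB, HC. ring. }
    split; [|split].
    + intro Z0. apply (f_equal IZR) in Z0. rewrite HA' in Z0.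
      simpl in Z0. apply Rmult_integral in Z0 as [Z0|Z0]; [apply Rmult_integral in Z0 as [Z0|Z0]|]; lra.
    + rewrite HA'. rewrite minus_IZR, mult_IZR, HB. field. lra.
    + rewrite HA'. rewrite minus_IZR, mult_IZR, HB. field. repeat split; lra.
  - assert (HA' : IZR (A+B+C) = IZR A * (1 - x) * (1 - b)).
    { rewrite !plus_IZR, HB, HC. ring. }
    split; [|split].
    + intro Z0. apply (f_equal IZR) in Z0. rewrite HA' in Z0.
      simpl in Z0. apply Rmult_integral in Z0 as [Z0|Z0]; [apply Rmult_integral in Z0 as [Z0|Z0]|]; lra.
    + rewrite HA'. rewrite plus_IZR, mult_IZR, HB. field. lra.
    + rewrite HA'. rewrite plus_IZR, mult_IZR, HB. field. repeat split; lra.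
Qed.

Lemma Rel_unique t t' x b b' : Rel t x b -> Rel t' x b' -> irrational x -> b = b'.
Proof.
  destruct t as [[A B] C]. destruct t' as [[A' B'] C'].
  intros H1 H2 Hi.
  destruct (Rel_BC _ _ _ _ _ H1) as [HB HC]. destruct (Rel_BC _ _ _ _ _ H2) as [HB' HC'].
  destruct H1 as [HA [E Hb]]. destruct H2 as [HA' [E' Hb']].
  apply not_0_IZR in HA. apply not_0_IZR in HA'.
  assert (L : (IZR A' * IZR B - IZR A * IZR B') * x + (IZR A' * IZR C - IZR A * IZR C') = 0).
  { replace ((IZR A' * IZR B - IZR A * IZR B') * x + (IZR A' * IZR C - IZR A * IZR C'))
      with (IZR A' * (IZR A * x ^ 2 + IZR B * x + IZR C) - IZR A * (IZR A' * x ^ 2 + IZR B' * x + IZR C')) by ring.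
    rewrite E, E'. ring. }
  destruct (Req_dec (IZR A' * IZR B - IZR A * IZR B') 0) as [Z|NZ].
  - 
    subst b b'. assert (IZR B / IZR A = IZR B' / IZR A') by (field_simplify_eq; auto; lra). lra.
  - exfalso. apply (irr_not_rat x Hi).
    assert (Ex : x = - (IZR A' * IZR C - IZR A * IZR C') / (IZR A' * IZR B - IZR A * IZR B'))
      by (field_simplify_eq; auto; lra).
    rewrite Ex. apply rat_div; auto.
    apply rat_opp. apply rat_minus; apply rat_mult; apply rat_IZR.
    apply rat_minus; apply rat_mult; apply rat_IZR.
Qed.

Fixpoint trs (al : R) (t0 : Z*Z*Z) (n : nat) : Z*Z*Z :=
  match n with O => t0 | S k => stepT (brx (lehner_iter k al)) (trs al t0 k) end.
Fixpoint bs (al : R) (b0 : R) (n : nat) : R :=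
  match n with O => b0 | S k => stepR (brx (lehner_iter k al)) (bs al b0 k) end.

Lemma Rel_orbit al t0 b0 : irrational al -> 1 < al < 2 -> Rel t0 al b0 ->
  forall n, Rel (trs al t0 n) (lehner_iter n al) (bs al b0 n).
Proof.
  intros Hi Hx H0 n. induction n as [|n IH]; simpl; auto.
  destruct (orbit_ok al Hi Hx n) as [Hin Hxn].
  pose proof (Rel_irr _ _ _ IH Hin) as Hb.
  rewrite lehner_map_step.
  apply step_Rel; auto; try lra.
  - apply (irr_neq_IZR _ 1 Hb).
  - apply (irr_neq_IZR _ 2 Hb).
Qed.

Lemma stepR_lt1 bb b : b < 1 ->
  stepR bb b < 1 /\ (bb = true -> 0 < stepR bb b) /\ (bb = false -> stepR bb b < 0).
Proof.
  intros H. destruct bb; unfold stepR.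
  - assert (E : 1 / (2 - b) * (2 - b) = 1) by (field; lra).
    set (y := 1 / (2-b)) in *. repeat split; intros; try discriminate; nra.
  - assert (E : 1 / (b - 1) * (b - 1) = 1) by (field; lra).
    set (y := 1 / (b-1)) in *. repeat split; intros; try discriminate; nra.
Qed.

Lemma bs_lt1 al b0 : b0 < 1 -> forall n, bs al b0 n < 1.
Proof. intros H n. induction n; simpl; auto. apply stepR_lt1; auto. Qed.

Definition tdisc (t : Z*Z*Z) : Z := let '(A,B,C) := t in (B*B - 4*A*C)%Z.

Lemma tdisc_step bb t : tdisc (stepT bb t) = tdisc t.
Proof. destruct t as [[A B] C]. destruct bb; unfold stepT, tdisc; cbv beta iota zeta; ring. Qed.

Lemma tdisc_trs al t0 n : tdisc (trs al t0 n) = tdisc t0.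
Proof. induction n; simpl; auto. rewrite tdisc_step; auto. Qed.

Definition inbox (K : Z) (t : Z*Z*Z) : Prop :=
  let '(A,B,C) := t in (-K <= A <= K /\ -K <= B <= K /\ -K <= C <= K)%Z.

Lemma Rel_bound t x b : Rel t x b -> 1 < x < 2 -> b < 1 -> inbox (7 * tdisc t) t.
Proof.
  destruct t as [[A B] C]. intros HR Hx Hb.
  destruct (Rel_BC _ _ _ _ _ HR) as [HB HC].
  destruct HR as [HA [E Hbe]]. unfold tdisc, inbox.
  assert (HD : IZR (B*B - 4*A*C) = (IZR A * (x - b))^2).
  { rewrite minus_IZR, !mult_IZR, HB, HC. ring. }
  set (D := (B*B-4*A*C)%Z) in *.
  assert (HS : IZR (A+B+C) = IZR A * (1 - x) * (1 - b)) by (rewrite !plus_IZR, HB, HC; ring).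
  assert (HS0 : (A+B+C)%Z <> 0%Z).
  { intro Z0. apply (f_equal IZR) in Z0. rewrite HS in Z0. simpl in Z0.
    apply not_0_IZR in HA.
    apply Rmult_integral in Z0 as [Z0|Z0]; [apply Rmult_integral in Z0 as [Z0|Z0]|]; lra. }
  assert (HS1 : (1 <= (A+B+C)*(A+B+C))%Z) by nia.
  apply IZR_le in HS1. rewrite mult_IZR, HS in HS1.
  set (a := IZR A) in *. set (s := a * (x - b)) in *.
  assert (HDp : 1 <= IZR D).
  { assert (0 < IZR D). { rewrite HD.
      assert (a <> 0) by (apply not_0_IZR; auto).
      assert (s <> 0). { unfold s. intro Z0. apply Rmult_integral in Z0 as [Z0|Z0]; lra. }
      assert (0 < s * s) by (destruct (Rle_or_lt 0 s); nra). simpl. lra. }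
    apply lt_IZR in H. apply IZR_le. lia. }
  assert (HA2 : a * a <= IZR D * IZR D).
  { rewrite HD.
    set (u := (x-1)*(1-b)). set (w := (x-b)^2). set (aa := a*a).
    assert (Hu : 0 <= u) by (unfold u; apply Rmult_le_pos; lra).
    assert (P : u * 4 <= w).
    { unfold u, w. assert (0 <= ((x-1) - (1-b))^2) by apply pow2_ge_0. nra. }
    assert (Haa : 0 <= aa) by (unfold aa; nra).
    assert (Q : 1 <= aa * u * u) by (unfold aa, u; nra).
    assert (Es : s ^ 2 = aa * w) by (unfold s, aa, w; ring).
    rewrite Es.
    assert (P2 : 16 * (u * u) <= w * w) by nra.
    assert (P3 : aa * aa * (16 * (u*u)) <= aa * aa * (w * w))
      by (apply Rmult_le_compat_l; nra).
    nra. }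
  assert (Hs2 : s * s <= IZR D * IZR D).
  { rewrite HD. assert (0 <= s*s) by nra. simpl. nra. }
  assert (HB2 : IZR B * IZR B <= 49 * (IZR D * IZR D)).
  { assert (EB : IZR B = s - 2 * a * x) by (rewrite HB; unfold s; ring).
    rewrite EB.
    assert (T1 : (s - 2*a*x)*(s - 2*a*x) <= 2*(s*s) + 8*(a*a)*(x*x)).
    { assert (0 <= (s + 2*a*x)^2) by apply pow2_ge_0. nra. }
    assert (T2 : (a*a)*(x*x) <= (a*a)*4) by (apply Rmult_le_compat_l; nra).
    nra. }
  assert (HC2 : IZR C * IZR C <= 49 * (IZR D * IZR D)).
  { assert (EC : IZR C = a * x * x - x * s) by (rewrite HC; unfold s; ring).
    rewrite EC.
    assert (T1 : (a*x*x - x*s)*(a*x*x - x*s) <= 2*((a*a)*(x*x*(x*x))) + 2*((x*x)*(s*s))).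
    { assert (0 <= (a*x*x + x*s)^2) by apply pow2_ge_0. nra. }
    assert (X2 : 0 <= x*x <= 4) by nra.
    assert (X4 : x*x*(x*x) <= 16).
    { replace 16 with (4*4) by ring. apply Rmult_le_compat; lra. }
    assert (T2 : (a*a)*(x*x*(x*x)) <= (a*a)*16) by (apply Rmult_le_compat_l; nra).
    assert (T3 : (x*x)*(s*s) <= 4 * (s*s)) by (apply Rmult_le_compat_r; nra).
    nra. }
  assert (HD0 : (1 <= D)%Z) by (apply le_IZR; auto).
  assert (ZA : (A * A <= D * D)%Z) by (apply le_IZR; rewrite !mult_IZR; auto).
  assert (ZB : (B * B <= 49 * (D * D))%Z) by (apply le_IZR; rewrite !mult_IZR; auto).
  assert (ZC : (C * C <= 49 * (D * D))%Z) by (apply le_IZR; rewrite !mult_IZR; auto).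
  repeat split; nia.
Qed.

Lemma php {T : Type} (dec : forall a b : T, {a = b} + {a <> b}) (L : list T) :
  forall f : nat -> T, (forall i, (i <= length L)%nat -> In (f i) L) ->
  exists i j, (i < j <= length L)%nat /\ f i = f j.
Proof.
  induction L as [|x L IH]; intros f Hf.
  - specialize (Hf 0%nat (le_n _)). destruct Hf.
  - simpl length in *. set (n := length L) in *.
    destruct (classic (exists j, (j <= n)%nat /\ f j = f (S n))) as [[j [Hj E]]|Hno].
    + exists j, (S n). split; [lia|auto].
    + set (g := fun i => if dec (f i) x then f (S n) else f i).
      assert (Hg : forall i, (i <= n)%nat -> In (g i) L).
      { intros i Hi. unfold g. destruct (dec (f i) x) as [E|NE].
        - destruct (Hf (S n) (le_n _)) as [E2|E2]; auto.
          exfalso. apply Hno. exists i. split; auto. congruence.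
        - destruct (Hf i ltac:(lia)) as [E2|E2]; auto. congruence. }
      destruct (IH g Hg) as [i [j [Hij E]]].
      exists i, j. split; [lia|]. unfold g in E.
      destruct (dec (f i) x), (dec (f j) x); try congruence.
      * exfalso. apply Hno. exists j. split; [lia|]. congruence.
      * exfalso. apply Hno. exists i. split; [lia|]. congruence.
Qed.

Definition rng (K : Z) : list Z := map (fun n => (Z.of_nat n - K)%Z) (seq 0 (Z.to_nat (2*K+1))).

Lemma in_rng K z : (-K <= z <= K)%Z -> In z (rng K).
Proof.
  intros H. unfold rng. apply in_map_iff. exists (Z.to_nat (z + K)).
  split. rewrite Z2Nat.id; lia. apply in_seq. lia.
Qed.

Definition box (K : Z) := list_prod (list_prod (rng K) (rng K)) (rng K).

Lemma in_box K t : inbox K t -> In t (box K).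
Proof.
  destruct t as [[A B] C]. intros [HA [HB HC]]. unfold box.
  apply in_prod_iff. split; [apply in_prod_iff; split|]; apply in_rng; auto.
Qed.

Lemma trip_dec : forall a b : Z*Z*Z, {a = b} + {a <> b}.
Proof. decide equality; try apply Z.eq_dec. decide equality; apply Z.eq_dec. Qed.

Lemma same_triple t x y b b' : Rel t x b -> Rel t y b' -> b < 1 -> 1 < y -> x = y.
Proof.
  destruct t as [[A B] C]. intros H1 H2 Hb Hy.
  destruct (Rel_BC _ _ _ _ _ H1) as [HB HC].
  destruct H1 as [HA _]. destruct H2 as [_ [E _]].
  rewrite HB, HC in E. apply not_0_IZR in HA.
  assert (E2 : IZR A * (y - x) * (y - b) = 0) by (rewrite <- E; ring).
  apply Rmult_integral in E2 as [E2|E2]; [apply Rmult_integral in E2 as [E2|E2]|]; lra.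
Qed.

Lemma conj_Rel x b : galois_conj x b -> exists t, Rel t x b.
Proof. intros [A [B [C H]]]. exists (A,B,C). exact H. Qed.

Lemma Rel_conj t x b : Rel t x b -> galois_conj x b.
Proof. destruct t as [[A B] C]. intros H. exists A, B, C. exact H. Qed.

Lemma rev_dir al : irrational al -> 1 < al < 2 ->
  quadratic_irrational al -> (forall beta, galois_conj al beta -> beta < 1) ->
  lehner_purely_periodic al.
Proof.
  intros Hi Hx [_ [a [b [c [Ha Hp]]]]] Hconj.
  set (t0 := (a,b,c)). set (b0 := - (IZR b / IZR a) - al).
  assert (H0 : Rel t0 al b0) by (unfold t0, b0; simpl; auto).
  assert (Hb0 : b0 < 1) by (apply Hconj; apply (Rel_conj t0); auto).
  pose proof (Rel_orbit al t0 b0 Hi Hx H0) as HR.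
  pose proof (bs_lt1 al b0 Hb0) as Hbs.
  set (K := (7 * tdisc t0)%Z).
  assert (Hin : forall i, In (trs al t0 i) (box K)).
  { intros i. apply in_box. unfold K. rewrite <- (tdisc_trs al t0 i).
    apply (Rel_bound _ _ _ (HR i)); auto. apply orbit_ok; auto. }
  destruct (php trip_dec (box K) (trs al t0) (fun i _ => Hin i)) as [i [j [Hij E]]].
  assert (Exij : lehner_iter i al = lehner_iter j al).
  { apply (same_triple (trs al t0 i) _ _ (bs al b0 i) (bs al b0 j)); auto.
    rewrite E; auto. apply orbit_ok; auto. }
  assert (Back : forall k, (k <= i)%nat -> lehner_iter (i - k) al = lehner_iter (j - k) al).
  { induction k as [|k IH]; intros Hk.
    - rewrite !Nat.sub_0_r. auto.
    - specialize (IH ltac:(lia)).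
      replace (i - k)%nat with (S (i - S k)) in IH by lia.
      replace (j - k)%nat with (S (j - S k)) in IH by lia.
      set (p := (i - S k)%nat) in *. set (q := (j - S k)%nat) in *.
      assert (Eb : bs al b0 (S p) = bs al b0 (S q)).
      { apply (Rel_unique _ (trs al t0 (S q)) _ _ _ (HR (S p))). rewrite IH. apply HR.
        apply orbit_ok; auto. }
      assert (Ebr : brx (lehner_iter p al) = brx (lehner_iter q al)).
      { simpl in Eb.
        destruct (stepR_lt1 (brx (lehner_iter p al)) _ (Hbs p)) as [_ [P1 P2]].
        destruct (stepR_lt1 (brx (lehner_iter q al)) _ (Hbs q)) as [_ [Q1 Q2]].
        destruct (brx (lehner_iter p al)), (brx (lehner_iter q al)); auto.
        - specialize (P1 eq_refl). specialize (Q2 eq_refl). lra.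
        - specialize (P2 eq_refl). specialize (Q1 eq_refl). lra. }
      rewrite (X_back al p Hi Hx), (X_back al q Hi Hx), Ebr, IH. reflexivity. }
  specialize (Back i (le_n _)). rewrite Nat.sub_diag in Back. simpl in Back.
  exists (j - i)%nat. split; [lia|].
  intros n. rewrite lehner_a_br, lehner_eps_br, lehner_a_br, lehner_eps_br.
  rewrite iter_add, <- Back. auto.
Qed.

Definition per (r : nat) (y : R) : Prop :=
  forall i, brx (lehner_iter (i + r) y) = brx (lehner_iter i y).

Lemma per_shift r y : per r y -> per r (lehner_iter r y).
Proof.
  intros H i. rewrite <- !iter_add. replace (i + r + r)%nat with ((i + r) + r)%nat by lia.
  apply H.
Qed.

Lemma map_back x : irrational x -> 1 < x < 2 -> x = gR (brx x) (lehner_map x).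
Proof.
  intros Hi Hx. rewrite lehner_map_step. rewrite gR_stepR; auto. destruct (brx x); lra.
Qed.

Lemma step_lip s t : irrational s -> 1 < s < 2 -> irrational t -> 1 < t < 2 ->
  brx s = brx t ->
  Rabs (s - t) <= Rabs (lehner_map s - lehner_map t) /\
  (3/2 <= lehner_map s -> 3/2 <= lehner_map t ->
     Rabs (s - t) <= 4/9 * Rabs (lehner_map s - lehner_map t)).
Proof.
  intros Hs Hs' Ht Ht' Eb.
  destruct (map_ok s Hs Hs') as [_ Ls]. destruct (map_ok t Ht Ht') as [_ Lt].
  pose proof (gR_lip (brx s) (lehner_map s) (lehner_map t) ltac:(lra) ltac:(lra)) as G.
  rewrite <- (map_back s Hs Hs') in G. rewrite Eb, <- (map_back t Ht Ht') in G.
  set (a := Rabs (s - t)) in *. set (d := Rabs (lehner_map s - lehner_map t)) in *.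
  assert (0 <= a) by apply Rabs_pos.
  split.
  - assert (1 <= lehner_map s * lehner_map t) by nra. nra.
  - intros H1 H2. assert (9/4 <= lehner_map s * lehner_map t) by nra. nra.
Qed.

Lemma branch2_exists y r : irrational y -> 1 < y < 2 -> per r y -> (0 < r)%nat ->
  exists j, (j < r)%nat /\ brx (lehner_iter j y) = false.
Proof.
  intros Hyi Hyx Hper Hr.
  destruct (classic (exists j, (j < r)%nat /\ brx (lehner_iter j y) = false)) as [H|H]; auto.
  exfalso.
  assert (Hall : forall n, brx (lehner_iter n y) = true).
  { intros n. induction n as [n IH] using (well_founded_induction lt_wf).
    destruct (lt_dec n r) as [Hn|Hn].
    - destruct (brx (lehner_iter n y)) eqn:E; auto. exfalso. apply H. exists n. auto.
    - replace n with ((n - r) + r)%nat by lia. rewrite Hper. apply IH. lia. }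
  set (delta := (y - 1)^2).
  assert (Hd : 0 < delta) by (unfold delta; apply pow_lt; lra).
  assert (Grow : forall n, y + INR n * delta <= lehner_iter n y).
  { induction n as [|n IH].
    - simpl. lra.
    - rewrite S_INR. simpl lehner_iter. rewrite lehner_map_step, Hall. unfold stepR.
      destruct (orbit_ok y Hyi Hyx n) as [_ Hn].
      pose proof (Hall n) as Hb. apply brx_true in Hb.
      set (z := lehner_iter n y) in *.
      assert (E : 1 / (2 - z) * (2 - z) = 1) by (field; lra).
      set (z' := 1 / (2 - z)) in *.
      assert (Ez : (z' - z) * (2 - z) = (z-1)^2) by nra.
      assert (0 <= INR n * delta) by (apply Rmult_le_pos; [apply pos_INR|lra]).
      assert (Hz1 : (y - 1) <= (z - 1)) by lra.
      assert (Hdd : delta <= (z-1)^2) by (unfold delta; simpl; nra).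
      assert (z' - z >= (z-1)^2) by nra.
      lra. }
  destruct (INR_unbounded (1 / delta)) as [n Hn].
  specialize (Grow n). pose proof (Hall n) as Hb. apply brx_true in Hb.
  assert (INR n * delta > 1).
  { assert (1 / delta * delta = 1) by (field; lra). nra. }
  lra.
Qed.


Lemma mono y z : irrational y -> 1 < y < 2 -> irrational z -> 1 < z < 2 ->
  (forall i, brx (lehner_iter i y) = brx (lehner_iter i z)) ->
  forall i d, Rabs (lehner_iter i y - lehner_iter i z) <=
              Rabs (lehner_iter (i + d) y - lehner_iter (i + d) z).
Proof.
  intros Hy Hy' Hz Hz' Hb i d. induction d as [|d IH].
  - rewrite Nat.add_0_r. lra.
  - eapply Rle_trans; [exact IH|].
    replace (i + S d)%nat with (S (i + d)) by lia. simpl.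
    destruct (orbit_ok y Hy Hy' (i+d)), (orbit_ok z Hz Hz' (i+d)).
    apply step_lip; auto.
Qed.

Lemma contr y r : irrational y -> 1 < y < 2 -> per r y -> (0 < r)%nat ->
  Rabs (y - lehner_iter r y) <=
  4/9 * Rabs (lehner_iter r y - lehner_iter r (lehner_iter r y)).
Proof.
  intros Hi Hx Hp Hr.
  set (z := lehner_iter r y).
  destruct (orbit_ok y Hi Hx r) as [Hzi Hzx]. fold z in Hzi, Hzx.
  assert (Hb : forall i, brx (lehner_iter i y) = brx (lehner_iter i z)).
  { intros i. unfold z. rewrite <- iter_add. symmetry. apply Hp. }
  destruct (branch2_exists y r Hi Hx Hp Hr) as [j [Hj Ej]].
  set (k := match j with O => r | _ => j end).
  assert (Hk : (1 <= k <= r)%nat) by (unfold k; destruct j; lia).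
  assert (Ek : brx (lehner_iter k y) = false).
  { unfold k. destruct j; auto. rewrite <- Ej. apply (Hp 0%nat). }
  pose proof (mono y z Hi Hx Hzi Hzx Hb 0 (k - 1)) as M1.
  pose proof (mono y z Hi Hx Hzi Hzx Hb k (r - k)) as M2.
  replace (k + (r - k))%nat with r in M2 by lia. simpl (0 + _)%nat in M1.
  destruct (orbit_ok y Hi Hx (k-1)), (orbit_ok z Hzi Hzx (k-1)).
  destruct (step_lip (lehner_iter (k-1) y) (lehner_iter (k-1) z)) as [_ S2]; auto.
  replace (lehner_map (lehner_iter (k - 1) y)) with (lehner_iter k y) in S2
    by (replace k with (S (k-1)) at 1 by lia; reflexivity).
  replace (lehner_map (lehner_iter (k - 1) z)) with (lehner_iter k z) in S2
    by (replace k with (S (k-1)) at 1 by lia; reflexivity).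
  assert (G1 : 3/2 <= lehner_iter k y) by (apply brx_false in Ek; lra).
  assert (G2 : 3/2 <= lehner_iter k z) by (assert (Ek2 : brx (lehner_iter k z) = false) by (rewrite <- Hb; auto); apply brx_false in Ek2; lra).
  specialize (S2 G1 G2).
  simpl lehner_iter in M1 at 1. 
  change (lehner_iter 0 y) with y in M1. change (lehner_iter 0 z) with z in M1.
  change (lehner_iter r y) with z in M2. lra.
Qed.

Lemma per_fix y r : irrational y -> 1 < y < 2 -> per r y -> (0 < r)%nat ->
  lehner_iter r y = y.
Proof.
  intros Hi Hx Hp Hr.
  assert (Hm : forall m y, irrational y -> 1 < y < 2 -> per r y ->
            Rabs (y - lehner_iter r y) <= (4/9)^m).
  { induction m as [|m IH]; intros z Hzi Hzx Hzp.
    - simpl. destruct (orbit_ok z Hzi Hzx r). apply Rabs_le. lra.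
    - eapply Rle_trans. apply contr; auto.
      destruct (orbit_ok z Hzi Hzx r).
      specialize (IH (lehner_iter r z) H H0 (per_shift r z Hzp)).
      simpl. lra. }
  destruct (Req_dec (lehner_iter r y) y) as [E|NE]; auto. exfalso.
  assert (Hd : 0 < Rabs (y - lehner_iter r y)) by (apply Rabs_pos_lt; lra).
  destruct (pow_lt_1_zero (4/9) ltac:(rewrite Rabs_pos_eq; lra) _ Hd) as [N HN].
  specialize (HN N (le_n _)). specialize (Hm N y Hi Hx Hp).
  rewrite Rabs_pos_eq in HN by (apply pow_le; lra). lra.
Qed.

Fixpoint mat (al : R) (n : nat) : Z*Z*Z*Z :=
  match n with
  | O => (1, 0, 0, 1)%Z
  | S k => let '(p, p', q, q') := mat al k in
           if brx (lehner_iter k al) then (p*2+p', -p, q*2+q', -q)%Z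
           else (p+p', p, q+q', q)%Z
  end.

Lemma mat_inv al : irrational al -> 1 < al < 2 -> forall n,
  let '(p, p', q, q') := mat al n in
  al * (IZR q * lehner_iter n al + IZR q') = IZR p * lehner_iter n al + IZR p' /\
  (0 <= q)%Z /\ (0 < q + q')%Z /\ ((0 < n)%nat -> (0 < q)%Z).
Proof.
  intros Hi Hx n. induction n as [|n IH].
  - simpl. split; [ring|]. lia.
  - simpl mat. destruct (mat al n) as [[[p p'] q] q'].
    destruct IH as [E [H1 [H2 _]]].
    destruct (orbit_ok al Hi Hx (S n)) as [_ Hy].
    pose proof (X_back al n Hi Hx) as Hb.
    set (x := lehner_iter n al) in *. set (y := lehner_iter (S n) al) in *.
    destruct (brx x); unfold gR in Hb.
    + assert (K : x * y = 2 * y - 1) by (rewrite Hb; field; lra).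
      split; [|lia].
      rewrite !plus_IZR, !mult_IZR, !opp_IZR.
      replace (al * ((IZR q * 2 + IZR q') * y + - IZR q))
        with (al * (y * (IZR q * (2 * y - 1) / y + IZR q'))) by (field; lra).
      rewrite <- K. replace (IZR q * (x * y) / y) with (IZR q * x) by (field; lra).
      replace (y * (IZR q * x + IZR q')) with ((IZR q * x + IZR q') * y) by ring.
      rewrite <- Rmult_assoc, E.
      replace ((IZR p * x + IZR p') * y) with (IZR p * (x * y) + IZR p' * y) by ring.
      rewrite K. ring.
    + assert (K : x * y = y + 1) by (rewrite Hb; field; lra).
      split; [|lia].
      rewrite !plus_IZR.
      replace (al * ((IZR q + IZR q') * y + IZR q))
        with (al * (y * (IZR q * (y + 1) / y + IZR q'))) by (field; lra).
      rewrite <- K. replace (IZR q * (x * y) / y) with (IZR q * x) by (field; lra).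
      replace (y * (IZR q * x + IZR q')) with ((IZR q * x + IZR q') * y) by ring.
      rewrite <- Rmult_assoc, E.
      replace ((IZR p * x + IZR p') * y) with (IZR p * (x * y) + IZR p' * y) by ring.
      rewrite K. ring.
Qed.

Lemma per_quad al r : irrational al -> 1 < al < 2 -> per r al -> (0 < r)%nat ->
  quadratic_irrational al.
Proof.
  intros Hi Hx Hp Hr. split; auto.
  pose proof (mat_inv al Hi Hx r) as M. rewrite (per_fix al r Hi Hx Hp Hr) in M.
  destruct (mat al r) as [[[p p'] q] q'].
  destruct M as [E [_ [_ Hq]]]. specialize (Hq Hr).
  exists q, (q' - p)%Z, (- p')%Z. split; [lia|].
  rewrite minus_IZR, opp_IZR. simpl. nra.
Qed.

Lemma per_conj al r : irrational al -> 1 < al < 2 -> per r al -> (0 < r)%nat ->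
  forall beta, galois_conj al beta -> beta < 1.
Proof.
  intros Hi Hx Hp Hr beta Hc.
  destruct (conj_Rel _ _ Hc) as [t Ht].
  pose proof (Rel_orbit al t beta Hi Hx Ht) as HR.
  pose proof (per_fix al r Hi Hx Hp Hr) as Hfix.
  assert (Hbr : bs al beta r = beta).
  { apply (Rel_unique (trs al t r) t al); auto. pose proof (HR r) as H'. rewrite Hfix in H'. exact H'. }
  assert (Hirr : forall n, irrational (bs al beta n)).
  { intros n. apply (Rel_irr _ _ _ (HR n)). apply orbit_ok; auto. }
  assert (Hback : forall i, bs al beta i = gR (brx (lehner_iter i al)) (bs al beta (S i))).
  { intros i. simpl. rewrite gR_stepR; auto.
    destruct (brx _); [apply (irr_neq_IZR _ 2)|apply (irr_neq_IZR _ 1)]; auto. }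
  destruct (Rlt_or_le beta 1) as [Hb|Hb]; auto. exfalso.
  assert (Down : forall d, (d <= r)%nat -> 1 <= bs al beta (r - d)).
  { induction d as [|d IH]; intros Hd.
    - rewrite Nat.sub_0_r, Hbr. auto.
    - specialize (IH ltac:(lia)). replace (r - d)%nat with (S (r - S d)) in IH by lia.
      rewrite Hback. set (t' := bs al beta (S (r - S d))) in *.
      assert (0 < 1 / t' <= 1).
      { split. apply Rdiv_lt_0_compat; lra.
        unfold Rdiv. rewrite Rmult_1_l. rewrite <- Rinv_1. apply Rinv_le_contravar; lra. }
      destruct (brx _); unfold gR; lra. }
  assert (Step : forall i, (i < r)%nat ->
     Rabs (lehner_iter i al - bs al beta i) < Rabs (lehner_iter (S i) al - bs al beta (S i))).
  { intros i Hi'.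
    destruct (orbit_ok al Hi Hx (S i)) as [Hxi Hxx].
    assert (Hb1 : 1 <= bs al beta (S i)) by (replace (S i) with (r - (r - S i))%nat by lia; apply Down; lia).
    pose proof (gR_lip (brx (lehner_iter i al)) (lehner_iter (S i) al) (bs al beta (S i)) ltac:(lra) ltac:(lra)) as G.
    rewrite <- Hback, <- (X_back al i Hi Hx) in G.
    assert (Hne : lehner_iter (S i) al <> bs al beta (S i)) by (apply (Rel_neq _ _ _ (HR (S i))); auto).
    assert (0 < Rabs (lehner_iter (S i) al - bs al beta (S i))) by (apply Rabs_pos_lt; lra).
    assert (1 < lehner_iter (S i) al * bs al beta (S i)) by nra.
    set (a := Rabs (lehner_iter i al - bs al beta i)) in *.
    assert (0 <= a) by apply Rabs_pos. nra. }
  assert (Chain : forall i, (1 <= i <= r)%nat ->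
     Rabs (lehner_iter 0 al - bs al beta 0) < Rabs (lehner_iter i al - bs al beta i)).
  { induction i as [|i IH]; intros Hi'; [lia|].
    destruct (Nat.eq_dec i 0) as [->|Hi0]. apply Step; lia.
    eapply Rlt_trans. apply IH; lia. apply Step; lia. }
  specialize (Chain r ltac:(lia)). rewrite Hfix, Hbr in Chain. simpl in Chain. lra.
Qed.

Lemma digits_per al r : (forall i : nat, lehner_a al (i + r) = lehner_a al i /\
                      lehner_eps al (i + r) = lehner_eps al i) -> per r al.
Proof.
  intros H i. destruct (H i) as [Ha _]. rewrite !lehner_a_br in Ha.
  destruct (brx (lehner_iter (i + r) al)), (brx (lehner_iter i al)); auto; lra.
Qed.

Definition Ctx al beta r := irrational al /\ 1 < al < 2 /\ per r al /\ (0 < r)%nat /\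
  galois_conj al beta.

Lemma ctx_facts al beta r : Ctx al beta r ->
  (forall n, bs al beta n < 1) /\ lehner_iter r al = al /\ bs al beta r = beta /\
  (forall n, 1 < lehner_iter n al < 2).
Proof.
  intros [Hi [Hx [Hp [Hr Hc]]]].
  pose proof (per_conj al r Hi Hx Hp Hr beta Hc) as Hb.
  destruct (conj_Rel _ _ Hc) as [t Ht].
  pose proof (Rel_orbit al t beta Hi Hx Ht) as HR.
  pose proof (per_fix al r Hi Hx Hp Hr) as Hfix.
  split; [apply bs_lt1; auto|]. split; auto. split.
  - apply (Rel_unique (trs al t r) t al); auto.
    pose proof (HR r) as H'. rewrite Hfix in H'. exact H'.
  - intros n. apply orbit_ok; auto.
Qed.

Definition rho al beta n t :=
  (t + bs al beta n) / ((t + lehner_iter n al) * (lehner_iter n al - bs al beta n)).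
Definition phi al i := (lehner_a al i - lehner_iter i al) ^ 2.
Definition hh al i t := lehner_eps al i / (lehner_a al i + t).

Lemma rho_step al beta r i t : Ctx al beta r -> -1 < t ->
  Rabs (rho al beta (S i) (hh al i t)) = phi al i * Rabs (rho al beta i t).
Proof.
  intros C Ht. destruct (ctx_facts _ _ _ C) as [Hb [_ [_ HX]]].
  specialize (Hb i). specialize (HX i).
  unfold rho, phi, hh. rewrite lehner_a_br, lehner_eps_br. simpl bs. simpl lehner_iter.
  rewrite lehner_map_step.
  set (x := lehner_iter i al) in *. set (b := bs al beta i) in *.
  destruct (brx x); unfold stepR.
  - assert (E1 : -1 / (2 + t) + 1 / (2 - b) = (t + b) / ((2 + t) * (2 - b))) by (field; lra).
    assert (E2 : -1 / (2 + t) + 1 / (2 - x) = (t + x) / ((2 + t) * (2 - x))) by (field; lra).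
    assert (E3 : 1 / (2 - x) - 1 / (2 - b) = (x - b) / ((2 - x) * (2 - b))) by (field; lra).
    rewrite E1, E2, E3.
    replace ((t + b) / ((2 + t) * (2 - b)) / ((t + x) / ((2 + t) * (2 - x)) * ((x - b) / ((2 - x) * (2 - b)))))
      with ((2 - x) ^ 2 * ((t + b) / ((t + x) * (x - b)))) by (field; repeat split; lra).
    rewrite Rabs_mult, (Rabs_pos_eq ((2-x)^2)) by apply pow2_ge_0. reflexivity.
  - assert (E1 : 1 / (1 + t) + 1 / (b - 1) = (t + b) / ((1 + t) * (b - 1))) by (field; lra).
    assert (E2 : 1 / (1 + t) + 1 / (x - 1) = (t + x) / ((1 + t) * (x - 1))) by (field; lra).
    assert (E3 : 1 / (x - 1) - 1 / (b - 1) = (b - x) / ((x - 1) * (b - 1))) by (field; lra).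
    rewrite E1, E2, E3.
    replace ((t + b) / ((1 + t) * (b - 1)) / ((t + x) / ((1 + t) * (x - 1)) * ((b - x) / ((x - 1) * (b - 1)))))
      with (- ((1 - x) ^ 2 * ((t + b) / ((t + x) * (x - b))))) by (field; repeat split; lra).
    rewrite Rabs_Ropp, Rabs_mult, (Rabs_pos_eq ((1-x)^2)) by apply pow2_ge_0. reflexivity.
Qed.

Lemma phi_bound al beta r i : Ctx al beta r -> 0 <= phi al i <= 1 /\ phi al i < 1.
Proof.
  intros C. destruct (ctx_facts _ _ _ C) as [_ [_ [_ HX]]]. specialize (HX i).
  unfold phi. rewrite lehner_a_br. destruct (brx _); simpl; split; try split; nra.
Qed.

Definition sidx r j := rev_idx r j.

Lemma sidx_lt r j : (0 < r)%nat -> (sidx r j < r)%nat.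
Proof. intros. unfold sidx, rev_idx. lia. Qed.

Lemma rho_r al beta r t : Ctx al beta r -> rho al beta r t = rho al beta 0 t.
Proof.
  intros C. destruct (ctx_facts _ _ _ C) as [_ [Hf [Hb _]]].
  unfold rho. rewrite Hf, Hb. reflexivity.
Qed.

Lemma level al beta r m t : Ctx al beta r ->
  rho al beta (S (sidx r (S m))) t = rho al beta (sidx r m) t.
Proof.
  intros C. assert (Hr : (0 < r)%nat) by (destruct C as [_ [_ [_ [H _]]]]; auto).
  unfold sidx, rev_idx.
  pose proof (Nat.div_mod m r ltac:(lia)) as Dm.
  pose proof (Nat.mod_upper_bound m r ltac:(lia)) as Um.
  set (u := (m mod r)%nat) in *. set (w := (m / r)%nat) in *.
  destruct (Nat.eq_dec u (r - 1)) as [Eu|Nu].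
  - assert (E : (S m mod r = 0)%nat).
    { symmetry. apply (Nat.mod_unique _ _ (S w)); lia. }
    rewrite E. replace (S (r - 1 - 0)) with r by lia.
    replace (r - 1 - u)%nat with 0%nat by lia. apply rho_r; auto.
  - assert (E : (S m mod r = S u)%nat).
    { symmetry. apply (Nat.mod_unique _ _ w); lia. }
    rewrite E. replace (S (r - 1 - S u)) with (r - 1 - u)%nat by lia. reflexivity.
Qed.

Definition V al r m k :=
  cf_aux (fun j => lehner_eps al (rev_idx r j)) (fun j => lehner_a al (rev_idx r j)) m k.

Lemma V_0 al r m : V al r m 0 = hh al (sidx r m) 0.
Proof. unfold V, hh, sidx. simpl. rewrite Rplus_0_r. reflexivity. Qed.

Lemma V_S al r m k : V al r m (S k) = hh al (sidx r m) (V al r (S m) k).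
Proof. unfold V, hh, sidx. simpl. reflexivity. Qed.

Lemma hh_gt al i t : -1 < t -> -1 < hh al i t.
Proof.
  intros H. unfold hh. rewrite lehner_a_br, lehner_eps_br. destruct (brx _).
  - assert (E : -1 / (2 + t) * (2 + t) = -1) by (field; lra).
    set (z := -1 / (2 + t)) in *. nra.
  - assert (E : 1 / (1 + t) * (1 + t) = 1) by (field; lra).
    set (z := 1 / (1 + t)) in *. nra.
Qed.

Lemma V_gt al r m k : -1 < V al r m k.
Proof.
  revert m. induction k as [|k IH]; intros m.
  - rewrite V_0. apply hh_gt. lra.
  - rewrite V_S. apply hh_gt. auto.
Qed.

Definition E al beta r m k := Rabs (rho al beta (S (sidx r m)) (V al r m k)).

Lemma E_S al beta r m k : Ctx al beta r ->
  E al beta r m (S k) = phi al (sidx r m) * E al beta r (S m) k.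
Proof.
  intros C. unfold E. rewrite V_S, rho_step with (r := r); auto using V_gt.
  rewrite <- (level al beta r m); auto.
Qed.

Lemma E_0 al beta r m : Ctx al beta r ->
  E al beta r m 0 = phi al (sidx r m) * Rabs (rho al beta (sidx r m) 0).
Proof. intros C. unfold E. rewrite V_0, rho_step with (r := r); auto. lra. Qed.

Fixpoint ksum al beta n : R :=
  match n with O => 0 | S n => ksum al beta n + Rabs (rho al beta n 0) end.

Lemma ksum_ge al beta n : 0 <= ksum al beta n /\
  forall i, (i < n)%nat -> Rabs (rho al beta i 0) <= ksum al beta n.
Proof.
  induction n as [|n [IH1 IH2]]; simpl.
  - split; [lra|]. intros; lia.
  - pose proof (Rabs_pos (rho al beta n 0)). split; [lra|].
    intros i Hi. destruct (Nat.eq_dec i n) as [->|Ne]. lra.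
    specialize (IH2 i ltac:(lia)). lra.
Qed.

Lemma E_le_K al beta r m k : Ctx al beta r -> E al beta r m k <= ksum al beta r.
Proof.
  intros C. assert (Hr : (0 < r)%nat) by (destruct C as [_ [_ [_ [H _]]]]; auto).
  revert m. induction k as [|k IH]; intros m.
  - rewrite E_0; auto. destruct (phi_bound al beta r (sidx r m) C) as [[P0 P1] _].
    destruct (ksum_ge al beta r) as [K0 K1]. specialize (K1 (sidx r m) (sidx_lt r m Hr)).
    pose proof (Rabs_pos (rho al beta (sidx r m) 0)). nra.
  - rewrite E_S; auto. destruct (phi_bound al beta r (sidx r m) C) as [[P0 P1] _].
    specialize (IH (S m)). unfold E in IH |- *. pose proof (Rabs_pos (rho al beta (S (sidx r (S m))) (V al r (S m) k))).
    nra.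
Qed.

Lemma E_mono al beta r n m k : Ctx al beta r ->
  E al beta r m (n + k) <= E al beta r (m + n) k.
Proof.
  intros C. revert m. induction n as [|n IH]; intros m.
  - rewrite Nat.add_0_r. simpl. lra.
  - simpl. rewrite E_S; auto. destruct (phi_bound al beta r (sidx r m) C) as [[P0 P1] _].
    specialize (IH (S m)). replace (S m + n)%nat with (m + S n)%nat in IH by lia.
    assert (0 <= E al beta r (S m) (n + k)) by apply Rabs_pos. nra.
Qed.

Lemma E_decay al beta r : Ctx al beta r -> forall q m k, (q * r <= k)%nat ->
  E al beta r m k <= (phi al 0) ^ q * ksum al beta r.
Proof.
  intros C. assert (Hr : (0 < r)%nat) by (destruct C as [_ [_ [_ [H _]]]]; auto).
  destruct (phi_bound al beta r 0 C) as [[T0 T1] _].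
  induction q as [|q IH]; intros m k Hk.
  - simpl. rewrite Rmult_1_l. apply E_le_K; auto.
  - set (d := (r - 1 - m mod r)%nat).
    pose proof (Nat.mod_upper_bound m r ltac:(lia)) as Um.
    assert (Hd : (sidx r (m + d) = 0)%nat).
    { unfold sidx, rev_idx. pose proof (Nat.div_mod m r ltac:(lia)) as Dm.
      assert (E1 : ((m + d) mod r = r - 1)%nat).
      { symmetry. apply (Nat.mod_unique _ _ (m / r)); unfold d; lia. }
      rewrite E1. lia. }
    assert (Hdr : (d < r)%nat) by (unfold d; lia).
    simpl in Hk.
    replace k with (d + S (k - d - 1))%nat by lia.
    eapply Rle_trans. apply E_mono; auto.
    rewrite E_S, Hd; auto.
    specialize (IH (S (m + d)) (k - d - 1)%nat ltac:(lia)).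
    assert (0 <= E al beta r (S (m + d)) (k - d - 1)) by apply Rabs_pos.
    simpl. nra.
Qed.

Lemma conv al beta r : Ctx al beta r ->
  Un_cv (cf_trunc (fun j => lehner_eps al (rev_idx r j))
                  (fun j => lehner_a al (rev_idx r j))) (- beta).
Proof.
  intros C. assert (Hr : (0 < r)%nat) by (destruct C as [_ [_ [_ [H _]]]]; auto).
  destruct (ctx_facts _ _ _ C) as [Hb [_ [_ HX]]].
  assert (Hx : 1 < al < 2) by (destruct C as [_ [H _]]; auto).
  assert (Hbeta : beta < 1) by (apply (Hb 0%nat)).
  set (c := al - beta). assert (Hc : 0 < c) by (unfold c; lra).
  set (K := ksum al beta r). destruct (ksum_ge al beta r) as [K0 _]. fold K in K0.
  set (th := phi al 0). destruct (phi_bound al beta r 0 C) as [[T0 _] T1]. fold th in T0, T1.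
  intros eps Heps.
  set (tau := Rmin (eps / (4 * c * c + 1)) (1 / (4 * c + 1))).
  assert (Htau : 0 < tau).
  { unfold tau. apply Rmin_pos; apply Rdiv_lt_0_compat; nra. }
  destruct (pow_lt_1_zero th ltac:(rewrite Rabs_pos_eq; lra) (tau / (K + 1))
              ltac:(apply Rdiv_lt_0_compat; lra)) as [q Hq].
  specialize (Hq q (le_n _)). rewrite Rabs_pos_eq in Hq by (apply pow_le; lra).
  exists (q * r)%nat. intros n Hn. unfold R_dist.
  pose proof (E_decay al beta r C q 0 n ltac:(lia)) as Hd. fold K th in Hd.
  unfold E in Hd.
  assert (Hs0 : S (sidx r 0) = r).
  { unfold sidx, rev_idx. rewrite Nat.Div0.mod_0_l by lia. lia. }
  rewrite Hs0, rho_r in Hd; auto.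
  change (cf_trunc (fun j => lehner_eps al (rev_idx r j)) (fun j => lehner_a al (rev_idx r j)) n)
    with (V al r 0 n).
  pose proof (V_gt al r 0 n) as HT.
  set (T := V al r 0 n) in *.
  unfold rho in Hd. simpl bs in Hd. simpl lehner_iter in Hd. fold c in Hd.
  set (rh := (T + beta) / ((T + al) * c)) in *.
  assert (Hrh : Rabs rh < tau).
  { assert (th ^ q * K <= th ^ q * (K + 1)) by (apply Rmult_le_compat_l; [apply pow_le|]; lra).
    assert (th ^ q * (K + 1) < tau).
    { apply (Rmult_lt_compat_r (K+1)) in Hq; [|lra].
      unfold Rdiv in Hq. rewrite Rmult_assoc, Rinv_l in Hq by lra. lra. }
    lra. }
  assert (Htau1 : tau <= 1 / (4 * c + 1)) by apply Rmin_r.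
  assert (Htau2 : tau <= eps / (4 * c * c + 1)) by apply Rmin_l.
  assert (Eq : (T + beta) * (1 - rh * c) = rh * c * c).
  { unfold rh, c. field. split; lra. }
  replace (T - - beta) with (T + beta) by ring.
  assert (H1 : Rabs (rh * c) < 1/2).
  { rewrite Rabs_mult, (Rabs_pos_eq c) by lra.
    assert (tau * c <= c / (4*c+1)).
    { apply (Rmult_le_compat_r c) in Htau1; [|lra]. unfold Rdiv in *. lra. }
    assert (c / (4 * c + 1) < 1/2).
    { apply Rmult_lt_reg_r with (4*c+1); [lra|]. unfold Rdiv. 
      rewrite Rmult_assoc, Rinv_l by lra. lra. }
    nra. }
  assert (H2 : 1/2 <= Rabs (1 - rh * c)).
  { pose proof (Rabs_triang_inv 1 (rh * c)). rewrite Rabs_R1 in H. lra. }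
  apply (f_equal Rabs) in Eq. rewrite !Rabs_mult, (Rabs_pos_eq c) in Eq by lra.
  assert (Hm : Rabs (T + beta) <= 2 * (Rabs rh * c * c)).
  { pose proof (Rabs_pos (T + beta)). nra. }
  assert (Rabs rh * (c * c) <= tau * (c * c)) by (apply Rmult_le_compat_r; [nra|lra]).
  assert (tau * (c * c) * 2 < eps).
  { assert (tau * (4 * c * c + 1) <= eps).
    { apply (Rmult_le_compat_r (4*c*c+1)) in Htau2; [|nra].
      replace (eps / (4 * c * c + 1) * (4 * c * c + 1)) with eps in Htau2 by (field; nra). lra. }
    nra. }
  nra.
Qed.

Theorem proposition6p2 (alpha : R) :
  1 < alpha -> alpha < 2 -> irrational alpha ->
  (lehner_purely_periodic alpha <->
     (quadratic_irrational alpha /\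
      forall beta, galois_conj alpha beta -> beta < 1))
  /\
  (forall r : nat, (0 < r)%nat ->
     (forall i : nat, lehner_a alpha (i + r) = lehner_a alpha i /\
                      lehner_eps alpha (i + r) = lehner_eps alpha i) ->
     forall beta, galois_conj alpha beta ->
       Un_cv (cf_trunc (fun j => lehner_eps alpha (rev_idx r j))
                       (fun j => lehner_a alpha (rev_idx r j)))
             (- beta)).
Proof.
  intros H1 H2 Hi. assert (Hx : 1 < alpha < 2) by lra. split; [split|].
  - intros [r [Hr Hd]]. pose proof (digits_per alpha r Hd) as Hp. split.
    + apply (per_quad alpha r); auto.
    + apply (per_conj alpha r); auto.
  - intros [Hq Hc]. apply rev_dir; auto.
  - intros r Hr Hd beta Hc. apply conv. repeat split; auto. apply digits_per; auto.
Qed.
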